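(* Let $\mathbb{H}$ be the real quaternion algebra and $R=\mathbb{H}[t_1,\ldots,t_n]$ the ring of polynomials in $n$ central commuting variables over $\mathbb{H}$. Let $M$ be a two-sided ideal of $R$ which is maximal as a left ideal. Then there exist $a_1,\ldots,a_n\in\mathbb{R}$ such that $t_1-a_1,\ldots,t_n-a_n$ generate $M$. *)

(* Defs.v *)
From HB Require Import structures.
From mathcomp Require Import all_boot all_order all_algebra.
From mathcomp Require Import ring.
From mathcomp Require Import mpoly.
From mathcomp Require Import reals.

Set Implicit Arguments.
Unset Strict Implicit.
Unset Printing Implicit Defensive.

Import Order.TTheory GRing.Theory Num.Theory.
Local Open Scope ring_scope.

(* The real quaternion algebra H = R + R i + R j + R k                *)
(* with i^2 = j^2 = k^2 = ijk = -1.                                   *)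
Section Quaternions.
Variable R : realType.

Record quat := Quat { q0 : R; q1 : R; q2 : R; q3 : R }.

Definition quat2tuple (x : quat) := (q0 x, q1 x, q2 x, q3 x).
Definition tuple2quat (t : R * R * R * R) :=
  let: (a, b, c, d) := t in Quat a b c d.
Lemma quat2tupleK : cancel quat2tuple tuple2quat. Proof. by case. Qed.

HB.instance Definition _ := Equality.copy quat (can_type quat2tupleK).
HB.instance Definition _ := Choice.copy quat (can_type quat2tupleK).

Definition qadd (x y : quat) :=
  Quat (q0 x + q0 y) (q1 x + q1 y) (q2 x + q2 y) (q3 x + q3 y).
Definition qopp (x : quat) := Quat (- q0 x) (- q1 x) (- q2 x) (- q3 x).
Definition qzero := Quat 0 0 0 0.
Definition qone := Quat 1 0 0 0.
Definition qmul (x y : quat) :=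
  Quat (q0 x * q0 y - q1 x * q1 y - q2 x * q2 y - q3 x * q3 y)
       (q0 x * q1 y + q1 x * q0 y + q2 x * q3 y - q3 x * q2 y)
       (q0 x * q2 y - q1 x * q3 y + q2 x * q0 y + q3 x * q1 y)
       (q0 x * q3 y + q1 x * q2 y - q2 x * q1 y + q3 x * q0 y).

Lemma qaddA : associative qadd.
Proof. by case=> ? ? ? ? [? ? ? ?] [? ? ? ?]; rewrite /qadd /= !addrA. Qed.
Lemma qaddC : commutative qadd.
Proof. by case=> ? ? ? ? [? ? ? ?]; rewrite /qadd /=; congr Quat; exact: addrC. Qed.
Lemma qadd0 : left_id qzero qadd.
Proof. by case=> ? ? ? ?; rewrite /qadd /= !add0r. Qed.
Lemma qaddN : left_inverse qzero qopp qadd.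
Proof. by case=> ? ? ? ?; rewrite /qadd /= !addNr. Qed.

HB.instance Definition _ := GRing.isZmodule.Build quat qaddA qaddC qadd0 qaddN.

Lemma qmulA : associative qmul.
Proof. by case=> ? ? ? ? [? ? ? ?] [? ? ? ?]; rewrite /qmul /=; congr Quat; ring. Qed.
Lemma qmul1 : left_id qone qmul.
Proof. by case=> ? ? ? ?; rewrite /qmul /=; congr Quat; ring. Qed.
Lemma qmulr1 : right_id qone qmul.
Proof. by case=> ? ? ? ?; rewrite /qmul /=; congr Quat; ring. Qed.
Lemma qmulDl : left_distributive qmul qadd.
Proof. by case=> ? ? ? ? [? ? ? ?] [? ? ? ?]; rewrite /qmul /qadd /=; congr Quat; ring. Qed.
Lemma qmulDr : right_distributive qmul qadd.
Proof. by case=> ? ? ? ? [? ? ? ?] [? ? ? ?]; rewrite /qmul /qadd /=; congr Quat; ring. Qed.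
Lemma qone_neq0 : qone != qzero.
Proof. by apply/eqP => -[] /eqP; rewrite oner_eq0. Qed.

HB.instance Definition _ :=
  GRing.Zmodule_isRing.Build quat qmulA qmul1 qmulr1 qmulDl qmulDr qone_neq0.

Definition qreal (a : R) : quat := Quat a 0 0 0.

End Quaternions.

Section Ideals.
Variable T : pzRingType.

Definition is_left_ideal (I : T -> Prop) : Prop :=
  [/\ I 0, (forall x y, I x -> I y -> I (x + y)) & (forall r x, I x -> I (r * x))].

Definition is_twosided_ideal (I : T -> Prop) : Prop :=
  is_left_ideal I /\ (forall r x, I x -> I (x * r)).

Definition is_maximal_left_ideal (I : T -> Prop) : Prop :=
  [/\ is_left_ideal I, (exists x, ~ I x) &
      (forall J : T -> Prop, is_left_ideal J -> (forall x, I x -> J x) ->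
         (forall x, J x <-> I x) \/ (forall x, J x))].

Definition left_ideal_gen (n : nat) (g : 'I_n -> T) (x : T) : Prop :=
  exists c : 'I_n -> T, x = \sum_(i < n) c i * g i.

End Ideals.

(* Main.v *)
Require Import Defs.
From HB Require Import structures.
From mathcomp Require Import all_boot all_order all_algebra.
From mathcomp Require Import ring lra.
From mathcomp Require Import mpoly.
From mathcomp Require Import reals.
From mathcomp Require Import complex.
From Stdlib Require Import Classical ClassicalEpsilon.
Import Order.TTheory GRing.Theory Num.Theory.
Local Open Scope ring_scope.
Set Implicit Arguments.
Unset Strict Implicit.
Unset Printing Implicit Defensive.


Section IdealFacts.
Variable T : nzRingType.
Variable M : T -> Prop.
Hypothesis hM2 : is_twosided_ideal M.
Hypothesis hMx : is_maximal_left_ideal M.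

Lemma M0 : M 0. Proof. by case: hM2 => -[]. Qed.
Lemma MD x y : M x -> M y -> M (x + y). Proof. by case: hM2 => -[_ h _ _]; apply: h. Qed.
Lemma Ml r x : M x -> M (r * x). Proof. by case: hM2 => -[_ _ h _]; apply: h. Qed.
Lemma Mr r x : M x -> M (x * r). Proof. by case: hM2 => _ h; apply: h. Qed.
Lemma MN x : M x -> M (- x). Proof. by move=> /(Ml (-1)); rewrite mulN1r. Qed.
Lemma MB x y : M x -> M y -> M (x - y). Proof. by move=> hx /MN; apply: MD. Qed.
Lemma Msum (I : Type) (r : seq I) (P : pred I) (F : I -> T) :
  (forall i, P i -> M (F i)) -> M (\sum_(i <- r | P i) F i).
Proof. move=> h; apply: (big_ind M) => //; [exact: M0 | exact: MD]. Qed.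
Lemma M1 : ~ M 1.
Proof. case: hMx => _ [x hx] _ h1; apply: hx; rewrite -(mulr1 x); exact: Ml. Qed.
Lemma Minv x : ~ M x -> exists u, M (u * x - 1).
Proof.
move=> hx; case: hMx => _ _ hmax.
pose J y := exists m u, M m /\ y = m + u * x.
have hJ : is_left_ideal J.
  split.
  - by exists 0, 0; rewrite mul0r addr0; split => //; exact: M0.
  - move=> y z [m [u [hm ->]]] [m' [u' [hm' ->]]]; exists (m + m'), (u + u').
    by split; [exact: MD | rewrite mulrDl addrACA].
  - move=> r y [m [u [hm ->]]]; exists (r * m), (r * u).
    by split; [exact: Ml | rewrite mulrDr mulrA].
have hMJ : forall y, M y -> J y by move=> y hy; exists y, 0; rewrite mul0r addr0.
case: (hmax J hJ hMJ) => [hJM | hJall].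
  by exfalso; apply: hx; apply/hJM; exists 0, 1; rewrite mul1r add0r; split => //; exact: M0.
have [m [u [hm e]]] := hJall 1; exists u.
have -> : u * x - 1 = - m by rewrite e opprD addrCA subrr addr0.
exact: MN.
Qed.
Lemma Mprime x y : M (x * y) -> ~ M x -> M y.
Proof.
move=> hxy /Minv [u hu].
have -> : y = u * (x * y) - (u * x - 1) * y by rewrite mulrBl mul1r mulrA opprB addrC subrK.
apply: MB; [exact: Ml | exact: Mr].
Qed.
End IdealFacts.
Section QuatFacts.
Variable R : realType.
Local Notation H := (quat R).

Lemma quat_mulE (x y : H) : x * y = qmul x y. Proof. by []. Qed.
Lemma quat_addE (x y : H) : x + y = qadd x y. Proof. by []. Qed.
Lemma quat_oppE (x : H) : - x = qopp x. Proof. by []. Qed.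
Lemma quat_0E : (0 : H) = Quat 0 0 0 0. Proof. by []. Qed.
Lemma quat_1E : (1 : H) = Quat 1 0 0 0. Proof. by []. Qed.

Lemma qrealC (c : R) (x : H) : qreal c * x = x * qreal c.
Proof. by case: x => ????; rewrite !quat_mulE /qmul /=; congr Quat; ring. Qed.
Lemma qrealM (a b : R) : qreal (a * b) = qreal a * qreal b.
Proof. by rewrite quat_mulE /qmul /=; congr Quat; ring. Qed.
Lemma qrealB (a b : R) : qreal (a - b) = qreal a - qreal b.
Proof. by rewrite quat_addE quat_oppE /qadd /=; congr Quat; ring. Qed.
Lemma qreal1 : qreal 1 = (1 : H). Proof. by []. Qed.
Lemma qreal0 : qreal 0 = (0 : H). Proof. by []. Qed.

Lemma quat_inv (x : H) : x != 0 -> exists y, y * x = 1.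
Proof.
case: x => a b c d hx.
pose s := a ^+ 2 + b ^+ 2 + c ^+ 2 + d ^+ 2.
have hs : s != 0.
  apply: contraNneq hx => hs0.
  have := sqr_ge0 a; have := sqr_ge0 b; have := sqr_ge0 c; have := sqr_ge0 d.
  rewrite /s in hs0 => h1 h2 h3 h4.
  have ha : a ^+ 2 = 0 by apply/eqP; rewrite eq_le sqr_ge0 andbT; lra.
  have hb : b ^+ 2 = 0 by apply/eqP; rewrite eq_le sqr_ge0 andbT; lra.
  have hc : c ^+ 2 = 0 by apply/eqP; rewrite eq_le sqr_ge0 andbT; lra.
  have hd : d ^+ 2 = 0 by apply/eqP; rewrite eq_le sqr_ge0 andbT; lra.
  move: ha hb hc hd => /eqP; rewrite sqrf_eq0 => /eqP -> /eqP; rewrite sqrf_eq0 => /eqP ->.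
  by move=> /eqP; rewrite sqrf_eq0 => /eqP -> /eqP; rewrite sqrf_eq0 => /eqP ->.
exists (Quat (a / s) (- b / s) (- c / s) (- d / s)).
rewrite quat_mulE /qmul /= quat_1E; congr Quat; rewrite /s in hs *; field; exact: hs.
Qed.

Definition qc (z : R[i]) : H := let: Complex a b := z in Quat a b 0 0.

Lemma qc_add : additive qc.
Proof. by case=> a b [c d]; rewrite /qc /= quat_addE quat_oppE /qadd /=; congr Quat; ring. Qed.
HB.instance Definition _ := GRing.isAdditive.Build _ _ qc qc_add.
Lemma qc_mul : multiplicative qc.
Proof. by split => [[a b] [c d]|] //; rewrite /qc /= quat_mulE /qmul /=; congr Quat; ring. Qed.
HB.instance Definition _ := GRing.isMultiplicative.Build _ _ qc qc_mul.

Lemma qc_real (a : R) : qc (a%:C)%C = qreal a. Proof. by []. Qed.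
Lemma qc_eq0 z : (qc z == 0) = (z == 0).
Proof.
case: z => a b; apply/eqP/eqP => [[-> ->]|[-> ->]] //.
Qed.
End QuatFacts.
Section LinDep.
Variable R : realType.
Variable n : nat.
Local Notation H := (quat R).
Local Notation P := {mpoly H[n]}.

Definition comp (k : 'I_4) (x : H) : R :=
  match val k with 0 => q0 x | 1 => q1 x | 2 => q2 x | _ => q3 x end.

Lemma comp_lin k (c : R) (x y : H) : comp k (qreal c * x + y) = c * comp k x + comp k y.
Proof. by case: k => -[|[|[|[|k]]]] hk; case: x => ????; case: y => ????; rewrite /comp /=; ring. Qed.
Lemma comp0 k : comp k 0 = 0.
Proof. by case: k => -[|[|[|[|k]]]]. Qed.
Lemma comp_eq0 (x : H) : (forall k, comp k x = 0) -> x = 0.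
Proof.
case: x => a b c d h.
have := h (@Ordinal 4 0 isT); have := h (@Ordinal 4 1 isT).
have := h (@Ordinal 4 2 isT); have := h (@Ordinal 4 3 isT).
by rewrite /comp /= => -> -> -> ->.
Qed.

Lemma coords_zero (N : nat) (p : P) : (msize p <= N)%N ->
  (forall (m : 'X_{1..n < N}) (k : 'I_4), comp k (p@_m) = 0) -> p = 0.
Proof.
move=> hs h; apply/mpolyP => m; rewrite mcoeff0.
case: (ltnP (mdeg m) N) => hm.
  by apply: comp_eq0 => k; exact: (h (BMultinom hm) k).
by apply: memN_msupp_eq0; apply: msize_mdeg_ge; exact: leq_trans hs hm.
Qed.

Lemma lin_dep (N : nat) (us : 'I_(#|{: 'X_{1..n < N} * 'I_4}|).+1 -> P) :
  (forall j, (msize (us j) <= N)%N) ->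
  exists c : 'I_(#|{: 'X_{1..n < N} * 'I_4}|).+1 -> R,
    (exists j, c j != 0) /\ \sum_j (qreal (c j))%:MP * us j = 0.
Proof.
move=> hN.
set K := #|{: 'X_{1..n < N} * 'I_4}|.
pose A : 'M[R]_(K.+1, K) :=
  \matrix_(j < K.+1, l < K)
    (let mk := @enum_val ('X_{1..n < N} * 'I_4)%type predT l in
     comp mk.2 ((us j)@_(bmnm mk.1))).
have hker : kermx A != 0.
  rewrite kermx_eq0 /row_free; apply/negP => /eqP hr.
  by have := rank_leq_col A; rewrite hr ltnn.
have [r hr] : exists r, row r (kermx A) != 0.
  apply/existsP; apply: contraNT hker; rewrite negb_exists => /forallP hr.
  apply/eqP/row_matrixP => i; rewrite row0; exact/eqP/negPn/hr.
set v := row r (kermx A) in hr.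
have hv : v *m A = 0 by rewrite /v -row_mul mulmx_ker row0.
exists (fun j => v 0 j); split.
  apply/existsP; apply: contraNT hr; rewrite negb_exists => /forallP hj.
  apply/eqP/rowP => j; have := hj j; rewrite negbK => /eqP ->; by rewrite mxE.
apply: (@coords_zero N).
  apply: (leq_trans (msize_sum _ _ _)); apply/bigmax_leqP => j _.
  by rewrite mul_mpolyC; apply: leq_trans (msizeZ_le _ _) (hN j).
move=> m k.
have := congr1 (fun B : 'M_(1, K) => B 0 (enum_rank (m, k))) hv; rewrite !mxE => <-.
rewrite raddf_sum /=.
elim/big_rec2: _ => [|j y1 y2 _ ]; first by rewrite comp0.
by move=> <-; rewrite /A !mxE /= enum_rankK /= mcoeffCM comp_lin.
Qed.
End LinDep.
Section Uncountable.
Variable R : realType.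

Definition ustep (I : R * R) (v : R) : R * R :=
  let: (l, r) := I in let d := (r - l) / 3 in
  if v <= l + d + d / 2 then (l + d + d, r) else (l, l + d).

Fixpoint useq (f : nat -> R) (k : nat) : R * R :=
  if k is k'.+1 then ustep (useq f k') (f k') else (0, 1).

Lemma ustep_prop (I : R * R) v : I.1 < I.2 ->
  let J := ustep I v in
  [/\ J.1 < J.2, I.1 <= J.1, J.2 <= I.2 & ~ (J.1 <= v <= J.2)].
Proof.
case: I => l r /= hlr; rewrite /ustep.
have hd : 0 < (r - l) / 3 by apply: divr_gt0; [rewrite subr_gt0 | ].
case: ifP => hv /=; split; try lra; move=> /andP [h1 h2]; try lra.
Qed.

Lemma useq_lt f k : (useq f k).1 < (useq f k).2.
Proof. elim: k => [|k IH] /=; first lra. by case: (ustep_prop (f k) IH). Qed.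

Lemma useq_mono f k d : (useq f k).1 <= (useq f (k + d)).1 /\ (useq f (k + d)).2 <= (useq f k).2.
Proof.
elim: d => [|d [IH1 IH2]]; first by rewrite addn0; split.
rewrite addnS /=; case: (ustep_prop (f (k + d)) (useq_lt f (k + d))) => _ h1 h2 _.
split; [exact: le_trans IH1 h1 | exact: le_trans h2 IH2].
Qed.

Lemma useq_lr f k j : (useq f k).1 <= (useq f j).2.
Proof.
case: (leqP k j) => hkj.
  have [h _] := useq_mono f k (j - k); rewrite subnKC // in h.
  by apply: le_trans h (ltW (useq_lt f j)).
have [_ h] := useq_mono f j (k - j); rewrite subnKC ?(ltnW hkj) // in h.
by apply: le_trans (ltW (useq_lt f k)) h.
Qed.

Lemma R_uncountable (f : nat -> R) : exists x, forall k, x != f k.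
Proof.
pose E : classical_sets.set R := fun y => exists k, y = (useq f k).1.
have hub : classical_sets.has_ubound E.
  by exists 1 => y [k ->]; apply: (useq_lr f k 0).
exists (sup E) => k.
have h1 : (useq f k.+1).1 <= sup E by apply: ub_le_sup hub _ _; exists k.+1.
have h2 : sup E <= (useq f k.+1).2.
  by apply: ge_sup; [exists (useq f 0).1; exists 0 | move=> y [j ->]; exact: useq_lr].
case: (ustep_prop (f k) (useq_lt f k)) => _ _ _ hnot.
apply/eqP => he; apply: hnot; rewrite he in h1 h2; exact/andP.
Qed.
End Uncountable.

Section PolyFacts.
Variable R : realType.
Variable n : nat.
Local Notation H := (quat R).
Local Notation P := {mpoly H[n]}.

Lemma Xc (i : 'I_n) (p : P) : p * 'X_i = 'X_i * p.
Proof. exact: commr_mpolyX. Qed.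

Lemma constC (c : H) : (forall x : H, c * x = x * c) -> forall p : P, c%:MP * p = p * c%:MP.
Proof.
move=> hc; elim/mpolyind => [|d m p _ _ IH]; first by rewrite mulr0 mul0r.
rewrite mulrDr mulrDl IH; congr (_ + _).
rewrite -mul_mpolyC mulrA -mpolyCM hc mpolyCM -!mulrA; congr (_ * _).
by rewrite commr_mpolyX.
Qed.

Definition rho (c : R) : P := (qreal c)%:MP.
Lemma rho_add : additive rho.
Proof. by move=> a b; rewrite /rho qrealB mpolyCB. Qed.
HB.instance Definition _ := GRing.isAdditive.Build _ _ rho rho_add.
Lemma rho_mul : multiplicative rho.
Proof. by split => [a b|]; rewrite /rho ?qrealM ?mpolyCM // qreal1 mpolyC1. Qed.
HB.instance Definition _ := GRing.isMultiplicative.Build _ _ rho rho_mul.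
Lemma rhoC (c : R) (p : P) : rho c * p = p * rho c.
Proof. by apply: constC => x; exact: qrealC. Qed.

Definition psi (z : R[i]) : P := (qc z)%:MP.
Lemma psi_add : additive psi.
Proof. by move=> a b; rewrite /psi rmorphB mpolyCB. Qed.
HB.instance Definition _ := GRing.isAdditive.Build _ _ psi psi_add.
Lemma psi_mul : multiplicative psi.
Proof. by split => [a b|]; rewrite /psi ?rmorphM ?mpolyCM // rmorph1 mpolyC1. Qed.
HB.instance Definition _ := GRing.isMultiplicative.Build _ _ psi psi_mul.

Lemma hornerM_X (i : 'I_n) (p q : {poly P}) : (p * q).['X_i] = p.['X_i] * q.['X_i].
Proof. by apply: hornerM_comm; rewrite /comm_poly Xc. Qed.

Definition ev (i : 'I_n) (g : {poly R}) : P := (map_poly rho g).['X_i].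
Lemma ev_add i : additive (ev i).
Proof. by move=> a b; rewrite /ev rmorphB hornerD hornerN. Qed.
HB.instance Definition _ i := GRing.isAdditive.Build _ _ (ev i) (ev_add i).
Lemma ev_mul i : multiplicative (ev i).
Proof. by split => [a b|]; rewrite /ev ?rmorphM ?hornerM_X // rmorph1 hornerC. Qed.
HB.instance Definition _ i := GRing.isMultiplicative.Build _ _ (ev i) (ev_mul i).
Lemma evXsubC i (a : R) : ev i ('X - a%:P) = 'X_i - rho a.
Proof. by rewrite /ev map_polyXsubC hornerXsubC. Qed.
Lemma evC i (a : R) : ev i a%:P = rho a.
Proof. by rewrite /ev map_polyC hornerC. Qed.
Lemma ev_psi i (g : {poly R}) :
  (map_poly psi (map_poly (real_complex R) g)).['X_i] = ev i g.
Proof. by rewrite -map_poly_comp /ev; congr horner; apply: eq_map_poly => c. Qed.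

End PolyFacts.

Section Steps.
Variable R : realType.
Variable n : nat.
Local Notation H := (quat R).
Local Notation P := {mpoly H[n]}.
Variable M : P -> Prop.
Hypothesis hM2 : is_twosided_ideal M.
Hypothesis hMx : is_maximal_left_ideal M.

Lemma M_const (c : H) : M c%:MP -> c = 0.
Proof.
move=> hc; apply/eqP; apply/negP => /negP /quat_inv [y hy].
apply: (M1 hM2 hMx); rewrite -mpolyC1 -hy mpolyCM; exact: Ml.
Qed.

Lemma stepC (i : 'I_n) (z : R[i]) : M ('X_i - psi n z) -> M ('X_i - rho n (complex.Re z)).
Proof.
case: z => b c /= h.
suff hc : c = 0 by move: h; rewrite hc.
pose j : H := Quat 0 0 1 0.
have h2 : M (j%:MP * ('X_i - psi n (b +i* c)%C) - ('X_i - psi n (b +i* c)%C) * j%:MP).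
  by apply: (MB hM2); [exact: Ml | exact: Mr].
have e : j%:MP * ('X_i - psi n (b +i* c)%C) - ('X_i - psi n (b +i* c)%C) * j%:MP
         = (Quat 0 0 0 (c + c))%:MP.
  have sub3 : forall x y z : P, x - y - (x - z) = z - y.
    by move=> x y z; rewrite opprB addrAC addrCA subrr addr0.
  rewrite mulrBr mulrBl commr_mpolyX /psi -!mpolyCM sub3 -mpolyCB.
  congr mpolyC; rewrite !quat_mulE quat_addE quat_oppE /qmul /qadd /qopp /=.
  congr Quat; ring.
rewrite e in h2; have := M_const h2 => -[]; lra.
Qed.

Lemma stepD (a : 'I_n -> R) : (forall i, M ('X_i - rho n (a i))) ->
  forall x, M x <-> left_ideal_gen (fun i : 'I_n => 'X_i - (qreal (a i))%:MP) x.
Proof.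
move=> ha.
set g := (fun i : 'I_n => 'X_i - (qreal (a i))%:MP).
set LG := left_ideal_gen g.
have LGD x y : LG x -> LG y -> LG (x + y).
  move=> [c1 ->] [c2 ->]; exists (fun i => c1 i + c2 i).
  by rewrite -big_split /=; apply: eq_bigr => i _; rewrite mulrDl.
have LGl r x : LG x -> LG (r * x).
  move=> [c1 ->]; exists (fun i => r * c1 i).
  by rewrite mulr_sumr; apply: eq_bigr => i _; rewrite mulrA.
have LGg i : LG (g i).
  exists (fun k => if k == i then 1 else 0).
  rewrite (bigD1 i) //= eqxx mul1r big1 ?addr0 // => k /negbTE ->; exact: mul0r.
have gC i p : g i * p = p * g i.
  by rewrite /g mulrBl mulrBr -commr_mpolyX -[(qreal _)%:MP]/(rho n _) rhoC.
have LGr r x : LG x -> LG (x * r).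
  move=> [c1 ->]; exists (fun i => c1 i * r).
  by rewrite mulr_suml; apply: eq_bigr => i _; rewrite -mulrA gC mulrA.
have LGM x : LG x -> M x.
  move=> [c1 ->]; apply: (Msum hM2) => i _; apply: (Ml hM2); exact: ha.
(* every polynomial is congruent to a constant *)
have hX (m : 'X_{1..n}) : LG ('X_[m] - (\prod_(i < n) qreal (a i) ^+ m i)%:MP).
  rewrite mpolyXE_id.
  elim/big_rec2: _ => [|i y2 y1 _ IH].
    by rewrite subrr; exists (fun _ => 0); rewrite big1 // => k _; rewrite mul0r.
  have eX k : LG ('X_i ^+ k - (qreal (a i) ^+ k)%:MP).
    elim: k => [|k IHk]; first by rewrite !expr0 subrr; exists (fun _ => 0); rewrite big1 // => k _; rewrite mul0r.
    have -> : 'X_i ^+ k.+1 - (qreal (a i) ^+ k.+1)%:MP =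
       ('X_i ^+ k - (qreal (a i) ^+ k)%:MP) * 'X_i + (qreal (a i) ^+ k)%:MP * g i.
      rewrite /g !exprSr mulrBl mulrBr !mpolyCM.
      by rewrite addrA subrK.
    by apply: LGD; [exact: LGr | exact: LGl].
  have -> : 'X_i ^+ m i * y1 - (qreal (a i) ^+ m i * y2)%:MP =
     ('X_i ^+ m i - (qreal (a i) ^+ m i)%:MP) * y1 + (qreal (a i) ^+ m i)%:MP * (y1 - y2%:MP).
    by rewrite mulrBl mulrBr mpolyCM addrA subrK.
  by apply: LGD; [exact: LGr | exact: LGl].
have hall (p : P) : exists c : H, LG (p - c%:MP).
  elim/mpolyind: p => [|c m p _ _ [d hd]].
    by exists 0; rewrite subrr; exists (fun _ => 0); rewrite big1 // => k _; rewrite mul0r.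
  exists (c * (\prod_(i < n) qreal (a i) ^+ m i) + d).
  have -> : c *: 'X_[m] + p - (c * (\prod_(i < n) qreal (a i) ^+ m i) + d)%:MP =
     c%:MP * ('X_[m] - (\prod_(i < n) qreal (a i) ^+ m i)%:MP) + (p - d%:MP).
    by rewrite -mul_mpolyC mulrBr -mpolyCM mpolyCD opprD !addrA; congr (_ + _); rewrite addrAC.
  by apply: LGD; [exact: LGl | exact: hd].
move=> x; split; last exact: LGM.
move=> hx; have [c hc] := hall x.
have hc0 : M c%:MP.
  have -> : c%:MP = x - (x - c%:MP) by rewrite opprB addrC subrK.
  by apply: (MB hM2) => //; exact: LGM.
by move: hc; rewrite (M_const hc0) subr0.
Qed.
End Steps.

Section StepB.
Variable R : realType.
Variable n : nat.
Local Notation H := (quat R).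
Local Notation P := {mpoly H[n]}.
Variable M : P -> Prop.
Hypothesis hM2 : is_twosided_ideal M.
Hypothesis hMx : is_maximal_left_ideal M.

Lemma stepB (i : 'I_n) (f : {poly R[i]}) : f != 0 ->
  M ((map_poly (psi n) f).['X_i]) -> exists z, M ('X_i - psi n z).
Proof.
move: {2}(size f) (leqnn (size f)) => k; elim: k f => [|k IH] f hk hf0 hM.
  by move: hf0; rewrite -size_poly_eq0; move: hk; rewrite leqn0 => ->.
case: (eqVneq (size f) 1%N) => hs.
  have [c hc0 hc] : exists2 c, c != 0 & f = c%:P by apply/size_poly1P; rewrite hs.
  move: hM; rewrite hc map_polyC hornerC /psi => /(M_const hM2 hMx) /eqP.
  by rewrite qc_eq0 (negbTE hc0).
have [z hz] : exists z, root f z by apply/closed_rootP.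
have [q hq] := factor_theorem _ _ hz.
case: (classic (M ('X_i - psi n z))) => hXz; first by exists z.
have hq0 : q != 0 by apply: contraNneq hf0 => hq0; rewrite hq hq0 mul0r.
apply: (IH q) => //.
  have := hk; rewrite hq size_mul ?polyXsubC_eq0 // size_XsubC addn2 /=; exact.
move: hM; rewrite hq mulrC rmorphM /= map_polyXsubC hornerM_X hornerXsubC.
by move/(Mprime hM2 hMx); apply.
Qed.
End StepB.

Lemma choiceP (A B : Type) (Q : A -> B -> Prop) :
  (forall x, exists y, Q x y) -> exists f, forall x, Q x (f x).
Proof.
move=> h; exists (fun x => proj1_sig (constructive_indefinite_description _ (h x))).
move=> x; exact: proj2_sig.
Qed.

Section StepA.
Variable R : realType.
Variable n : nat.
Local Notation H := (quat R).
Local Notation P := {mpoly H[n]}.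
Variable M : P -> Prop.
Hypothesis hM2 : is_twosided_ideal M.
Hypothesis hMx : is_maximal_left_ideal M.

Lemma stepA (i : 'I_n) : exists z : R[i], M ('X_i - psi n z).
Proof.
case: (classic (exists a : R, M ('X_i - rho n a))) => [[a ha]|hnone].
  by exists (a%:C)%C.
have hinv : forall a : R, exists u, M (u * ('X_i - rho n a) - 1).
  by move=> a; apply: (Minv hM2 hMx) => h; apply: hnone; exists a.
have [u hu] := choiceP hinv.
have [N hN] : exists N, forall s : seq R, exists a, a \notin s /\ (msize (u a) <= N)%N.
  apply: NNPP => hno.
  have hs : forall N, exists s : seq R, forall a, (msize (u a) <= N)%N -> a \in s.
    move=> N; apply: NNPP => h1; apply: hno; exists N => s; apply: NNPP => h2.
    apply: h1; exists s => a ha; apply: NNPP => h3; apply: h2; exists a; split => //.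
    exact/negP.
  have [sN hsN] := choiceP hs.
  pose f k := if @unpickle (prod nat nat) k is Some p then nth 0 (sN p.1) p.2 else 0.
  have [x hx] := R_uncountable f.
  have hxin := hsN (msize (u x)) x (leqnn _).
  have := hx (pickle (msize (u x), index x (sN (msize (u x))))).
  by rewrite /f pickleK /= nth_index // eqxx.
set K := #|{: 'X_{1..n < N} * 'I_4}|.
have [s [hsz hsu hsa]] : exists s : seq R,
    [/\ size s = K.+1, uniq s & all (fun a => msize (u a) <= N)%N s].
  elim: K.+1 => [|k [s [h1 h2 h3]]]; first by exists [::].
  have [a [ha1 ha2]] := hN s; exists (a :: s).
  by rewrite /= h1 h2 h3 ha1 ha2.
pose a (j : 'I_K.+1) := nth 0 s j.
pose us (j : 'I_K.+1) := u (a j).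
have hus : forall j, (msize (us j) <= N)%N.
  by move=> j; apply: (allP hsa); apply: mem_nth; rewrite hsz.
have [c [[j0 hj0] hc]] := lin_dep hus.
pose L (j : 'I_K.+1) : {poly R} := 'X - (a j)%:P.
pose g : {poly R} := \sum_j (c j)%:P * \prod_(k | k != j) L k.
have ha_inj : forall j k : 'I_K.+1, (a j == a k) = (j == k).
  by move=> j k; rewrite /a nth_uniq ?hsz.
have hg0 : g != 0.
  apply/negP => /eqP hg; have := congr1 (fun p => p.[a j0]) hg.
  rewrite horner0 horner_sum (bigD1 j0) //= [X in _ + X]big1 ?addr0; last first.
    move=> j hj; rewrite hornerCM horner_prod (bigD1 j0) 1?eq_sym //=.
    by rewrite hornerXsubC subrr mul0r mulr0.
  rewrite hornerCM horner_prod => /eqP; rewrite mulf_eq0 (negbTE hj0) /=.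
  apply/negP/prodf_neq0 => k hk; rewrite hornerXsubC subr_eq0 ha_inj eq_sym; exact: hk.
have hMg : M (ev i g).
  have e1 : forall j, M (rho n (c j) * (us j * ('X_i - rho n (a j)) - 1) *
                         ev i (\prod_(k | k != j) L k)).
    by move=> j; apply: (Mr hM2); apply: (Ml hM2); exact: hu.
  have := @Msum _ _ hM2 _ (index_enum 'I_K.+1) predT _ (fun j _ => e1 j).
  have eP j : ev i (\prod_k L k) = ('X_i - rho n (a j)) * ev i (\prod_(k | k != j) L k).
    by rewrite (bigD1 j) //= rmorphM /=; congr (_ * _); exact: evXsubC.
  under eq_bigr => j _ do rewrite mulrBr mulr1 mulrBl -!mulrA -eP mulrA -(evC i) -rmorphM.
  rewrite sumrB -mulr_suml -rmorph_sum.
  have -> : \sum_(j | predT j) ev i (c j)%:P * us j = 0.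
    by rewrite -[RHS]hc; apply: eq_bigr => j _; rewrite evC.
  by rewrite mul0r sub0r => /(MN hM2); rewrite opprK.
apply: (stepB hM2 hMx (f := map_poly (real_complex R) g)).
  by rewrite map_poly_eq0.
by rewrite ev_psi.
Qed.
End StepA.

Theorem proposition4p7 (R : realType) (n : nat) (M : {mpoly (quat R)[n]} -> Prop) :
  is_twosided_ideal M -> is_maximal_left_ideal M ->
  exists a : 'I_n -> R,
    forall x, M x <-> left_ideal_gen (fun i : 'I_n => 'X_i - (qreal (a i))%:MP) x.
Proof.
move=> hM2 hMx.
have [z hz] := choiceP (stepA hM2 hMx).
exists (fun i => complex.Re (z i)).
apply: (stepD hM2 hMx) => i.
exact: (stepC hM2 hMx (hz i)).
Qed.
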